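(* In the setting below, suppose that the function $x\mapsto f(x)+g(Ax)$ is bounded below on $\mathbb R^n$ (equivalently, $F(x)=f(x)+g(Ax)+\Phi_{0,\lambda}(Bx-b)$ is bounded below) and that $\{x:\ x\in\operatorname{ri}(\operatorname{dom}f),\ Ax\in\operatorname{ri}(\operatorname{dom}g),\ Bx=b\}\neq\emptyset$, where ''$\operatorname{ri}$'' may be omitted for $f$ (resp. $g$) if $f$ (resp. $g$) is polyhedral. Then for every $\mu>0$ the problem $\inf_{w=[y;z]}\ \Xi(w)+\Psi_{0,\mu}(z)$ has a global minimizer.
   Context: Let $f:\mathbb R^n\to(-\infty,\infty]$ and $g:\mathbb R^m\to(-\infty,\infty]$ be proper, lsc and convex, with convex conjugates $f^*(q)=\sup_x\{\langle q,x\rangle-f(x)\}$, $g^*$. Let $A\in\mathbb R^{m\times n}$, $B\in\mathbb R^{r\times n}$, $b\in\mathbb R^r$, $\lambda,\mu\in\mathbb R^r$ with $\lambda,\mu>0$. $\Phi_{0,\lambda}(u)=\sum_i\lambda_i\mathbf 1_{\{u_i\neq0\}}$. For $w=[y;z]\in\mathbb R^m\times\mathbb R^r$, $\Xi(w):=f^*(-A^\top y-B^\top z)+g^*(y)+\langle b,z\rangle$. $\Psi_{0,\mu}(z)=\sum_{i=1}^r\mu_i\mathbf 1_{\{z_i\ne0\}}$. $\operatorname{ri}$ denotes relative interior. *)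

(* Defs.v *)
From HB Require Import structures.
From mathcomp Require Import all_boot all_order all_algebra.
From mathcomp Require Import all_classical all_reals ereal.
Set Implicit Arguments. Unset Strict Implicit. Unset Printing Implicit Defensive.
Import Order.TTheory GRing.Theory Num.Theory.
Local Open Scope ring_scope.
Local Open Scope classical_set_scope.

Section ConvexDefs.
Variable R : realType.

Definition dotv (n : nat) (u v : 'cV[R]_n) : R := \sum_(i < n) u i 0 * v i 0.

Definition dom (n : nat) (f : 'cV[R]_n -> \bar R) : set 'cV[R]_n :=
  [set x | (f x < +oo)%E].

Definition proper_fun (n : nat) (f : 'cV[R]_n -> \bar R) : Prop :=
  (forall x, f x != -oo%E) /\ (exists x, (f x < +oo)%E).

Definition convex_fun (n : nat) (f : 'cV[R]_n -> \bar R) : Prop :=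
  forall (x y : 'cV[R]_n) (t : R), 0 <= t -> t <= 1 ->
    (f x < +oo)%E -> (f y < +oo)%E ->
    (f (t *: x + (1 - t) *: y)%R <= (t * fine (f x) + (1 - t) * fine (f y))%:E)%E.

Definition lsc_fun (n : nat) (f : 'cV[R]_n -> \bar R) : Prop :=
  forall (x : 'cV[R]_n) (a : R), (a%:E < f x)%E ->
    exists2 d : R, 0 < d &
      forall y : 'cV[R]_n, (forall i, `|y i 0 - x i 0| < d) -> (a%:E < f y)%E.

Definition conj_fun (n : nat) (f : 'cV[R]_n -> \bar R) (q : 'cV[R]_n) : \bar R :=
  ereal_sup [set ((dotv q x)%:E - f x)%E | x in [set: 'cV[R]_n]].

Definition aff_hull (n : nat) (C : set 'cV[R]_n) : set 'cV[R]_n :=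
  [set y | exists (k : nat) (p : 'I_k -> 'cV[R]_n) (c : 'I_k -> R),
      (forall j, C (p j)) /\ \sum_(j < k) c j = 1 /\ y = \sum_(j < k) c j *: p j].

Definition rel_int (n : nat) (C : set 'cV[R]_n) : set 'cV[R]_n :=
  [set x | C x /\ exists2 e : R, 0 < e &
      forall y, aff_hull C y -> (forall i, `|y i 0 - x i 0| < e) -> C y].

(* polyhedral function: its epigraph is a polyhedral set (finite intersection
   of closed half-spaces of R^n x R) *)
Definition polyhedral_fun (n : nat) (f : 'cV[R]_n -> \bar R) : Prop :=
  exists (k : nat) (a : 'I_k -> 'cV[R]_n) (al be : 'I_k -> R),
    forall (x : 'cV[R]_n) (t : R),
      (f x <= t%:E)%E <-> (forall j, dotv (a j) x + al j * t <= be j).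

Definition Psi0 (r : nat) (mu z : 'cV[R]_r) : R :=
  \sum_(i < r) mu i 0 * (z i 0 != 0)%:R.

Definition Xi (n m r : nat) (f : 'cV[R]_n -> \bar R) (g : 'cV[R]_m -> \bar R)
    (A : 'M[R]_(m, n)) (B : 'M[R]_(r, n)) (b : 'cV[R]_r)
    (y : 'cV[R]_m) (z : 'cV[R]_r) : \bar R :=
  (conj_fun f (- (A^T *m y) - (B^T *m z)) + conj_fun g y + (dotv b z)%:E)%E.

End ConvexDefs.

(* Main.v *)
Require Import Defs.
From HB Require Import structures.
From mathcomp Require Import all_boot all_order all_algebra.
From mathcomp Require Import all_classical all_reals ereal.
From mathcomp Require Import ring lra.
Import Order.TTheory GRing.Theory Num.Theory.
Local Open Scope ring_scope.
Local Open Scope classical_set_scope.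

Set Implicit Arguments. Unset Strict Implicit. Unset Printing Implicit Defensive.


Section Abstract.
Variable R : realType.
Variable V : Type.
Variable comb : R -> V -> V -> V.

Definition affine (l : V -> R) := forall t u v, l (comb t u v) = t * l u + (1 - t) * l v.
Definition convset (D : set V) := forall t u v, 0 <= t -> t <= 1 -> D u -> D v -> D (comb t u v).
Definition convon (D : set V) (H : V -> R) := forall t u v, 0 <= t -> t <= 1 -> D u -> D v ->
  H (comb t u v) <= t * H u + (1 - t) * H v.

Lemma oneD_core (D : set V) H l p :
  convset D -> convon D H -> affine l -> (forall v, D v -> l v = 0 -> p <= H v) ->
  forall u w, D u -> D w -> 0 < l u -> l w < 0 -> (p - H u) / l u <= (H w - p) / (- l w).
Proof.
move=> cD cH al hp u w Du Dw lu lw.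
set a := l u in lu *; set b := - l w.
have bp : 0 < b by rewrite /b oppr_gt0.
have abp : 0 < a + b by rewrite addr_gt0.
set t := b / (a + b).
have t0 : 0 <= t by rewrite divr_ge0 // ltW.
have t1 : t <= 1 by rewrite ler_pdivrMr // mul1r lerDr ltW.
have ht : 1 - t = a / (a + b).
  by rewrite /t; field; rewrite lt0r_neq0.
have Dc := cD t u w t0 t1 Du Dw.
have lc : l (comb t u w) = 0.
  rewrite al ht /t -/a; rewrite -[l w]opprK -/b; field; rewrite lt0r_neq0 //.
have := hp _ Dc lc; have := cH t u w t0 t1 Du Dw => h1 h2.
have h3 : p <= t * H u + (1 - t) * H w by apply: le_trans h2 h1.
rewrite ht /t in h3.
rewrite -subr_ge0.
have -> : (H w - p) / - l w - (p - H u) / a =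
    ((b / (a + b) * H u + a / (a + b) * H w) - p) * (a + b) / (a * b).
  rewrite /b; field.
  rewrite lt_eqF // gt_eqF //=; move: abp; rewrite /b => abp; by rewrite gt_eqF.
apply: divr_ge0; [apply: mulr_ge0; [by rewrite subr_ge0|exact: ltW]|apply: mulr_ge0; exact: ltW].
Qed.


Lemma oneD_apply (D : set V) (H l : V -> R) (p k : R) :
  (forall v, D v -> l v = 0 -> p <= H v) ->
  (forall u, D u -> 0 < l u -> (p - H u) / l u <= k) ->
  (forall w, D w -> l w < 0 -> k <= (H w - p) / (- l w)) ->
  forall v, D v -> p <= H v + k * l v.
Proof.
move=> h0 hu hw v Dv.
case: (ltgtP (l v) 0) => lv.
- have := hw v Dv lv; rewrite ler_pdivlMr ?oppr_gt0 // => h.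
  by rewrite -subr_ge0 -[X in 0 <= X]subr0 -(subrr (k * - l v)) opprB addrA; lra.
- have := hu v Dv lv; rewrite ler_pdivrMr // => h; lra.
- by rewrite lv mulr0 addr0; apply: h0.
Qed.

Definition slopes (D : set V) (H l : V -> R) (p : R) : set R :=
  [set (p - H u) / l u | u in [set u | D u /\ 0 < l u]].

Lemma slopes_ub (D : set V) (H l : V -> R) (p : R) w :
  convset D -> convon D H -> affine l -> (forall v, D v -> l v = 0 -> p <= H v) ->
  D w -> l w < 0 -> ubound (slopes D H l p) ((H w - p) / (- l w)).
Proof.
move=> cD cH al hp Dw lw _ [u [Du lu] <-].
exact: (oneD_core cD cH al hp Du Dw lu lw).
Qed.

Lemma oneD_ineq (D : set V) (H l : V -> R) (p : R) :
  convset D -> convon D H -> affine l -> (forall v, D v -> l v <= 0 -> p <= H v) ->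
  (exists w, D w /\ l w < 0) ->
  exists k, 0 <= k /\ forall v, D v -> p <= H v + k * l v.
Proof.
move=> cD cH al hp [w0 [Dw0 lw0]].
have hp0 : forall v, D v -> l v = 0 -> p <= H v by move=> v Dv lv; apply: hp => //; rewrite lv.
have hub : has_ubound (slopes D H l p).
  by exists ((H w0 - p) / (- l w0)); apply: slopes_ub.
exists (Num.max 0 (sup (slopes D H l p))); split; first by rewrite le_max lexx.
apply: oneD_apply => //.
- move=> u Du lu; rewrite le_max; apply/orP; right.
  by apply: ub_le_sup => //; exists u.
- move=> w Dw lw; rewrite ge_max; apply/andP; split.
    by rewrite divr_ge0 ?oppr_ge0 ?subr_ge0 ?(ltW lw) //; apply: hp => //; apply: ltW.
  have [ne|e] := pselect (slopes D H l p !=set0).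
    by apply: ge_sup => //; apply: slopes_ub.
  have -> : slopes D H l p = set0 by apply/seteqP; split => // x Sx; apply: e; exists x.
  by rewrite sup0 divr_ge0 ?oppr_ge0 ?subr_ge0 ?(ltW lw) //; apply: hp => //; apply: ltW.
Qed.

Lemma oneD_eq (D : set V) (H l : V -> R) (p : R) :
  convset D -> convon D H -> affine l -> (forall v, D v -> l v = 0 -> p <= H v) ->
  (forall v, D v -> l v != 0 -> exists w, D w /\ l v * l w < 0) ->
  exists k, forall v, D v -> p <= H v + k * l v.
Proof.
move=> cD cH al hp hs.
have [[u0 [Du0 lu0]]|nou] := pselect (exists u, D u /\ 0 < l u).
  have [w0 [Dw0]] := hs u0 Du0 (lt0r_neq0 lu0).
  rewrite pmulr_rlt0 // => lw0.
  have hub : has_ubound (slopes D H l p).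
    by exists ((H w0 - p) / (- l w0)); apply: slopes_ub.
  exists (sup (slopes D H l p)).
  apply: oneD_apply => //.
  - by move=> u Du lu; apply: ub_le_sup => //; exists u.
  - move=> w Dw lw; apply: ge_sup; last by apply: slopes_ub.
    by exists ((p - H u0) / l u0); exists u0.
exists 0 => v Dv; rewrite mul0r addr0; apply: hp => //.
case: (ltgtP (l v) 0) => lv'; last by [].
- have [w [Dw]] := hs v Dv (ltr0_neq0 lv').
  rewrite nmulr_rlt0 // => lw; exfalso; apply: nou; by exists w.
- by exfalso; apply: nou; exists v.
Qed.

Definition riext (D : set V) v0 := D v0 /\ forall v, D v ->
  exists2 e : R, 0 < e & forall e', 0 < e' -> e' <= e -> D (comb (1 + e') v0 v).

Lemma convon_add (D : set V) H a : convon D H -> affine a -> convon D (fun v => H v + a v).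
Proof.
move=> cH aa t u v t0 t1 Du Dv; rewrite aa.
have := cH t u v t0 t1 Du Dv; lra.
Qed.

Lemma affine_scale (a : V -> R) k : affine a -> affine (fun v => k * a v).
Proof. by move=> aa t u v; rewrite aa; ring. Qed.

Lemma affine_sum (I : finType) (l : I -> V -> R) (J : {set I}) (c : I -> R) :
  (forall i, affine (l i)) -> affine (fun v => \sum_(i in J) c i * l i v).
Proof.
move=> hl t u v.
rewrite !mulr_sumr -big_split /=; apply: eq_bigr => i _; rewrite hl; ring.
Qed.

Lemma convon_sub (D D' : set V) H : D' `<=` D -> convon D H -> convon D' H.
Proof. by move=> sD cH t u v t0 t1 Du Dv; apply: cH => //; apply: sD. Qed.

Lemma convset_cap_eq (I : finType) (l : I -> V -> R) (S : {set I}) (D : set V) :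
  (forall i, affine (l i)) -> convset D ->
  convset (fun v => D v /\ forall i, i \in S -> l i v = 0).
Proof.
move=> hl cD t u v t0 t1 [Du hu] [Dv hv]; split; first exact: cD.
by move=> i iS; rewrite hl hu // hv // !mulr0 addr0.
Qed.

Lemma convset_cap_le (I : finType) (l : I -> V -> R) (S : {set I}) (D : set V) :
  (forall i, affine (l i)) -> convset D ->
  convset (fun v => D v /\ forall i, i \in S -> l i v <= 0).
Proof.
move=> hl cD t u v t0 t1 [Du hu] [Dv hv]; split; first exact: cD.
move=> i iS; rewrite hl; have := hu i iS; have := hv i iS.
have : 0 <= 1 - t by rewrite subr_ge0.
move=> t2 h1 h2; rewrite -oppr_ge0 opprD; apply: addr_ge0; rewrite -mulrN; apply: mulr_ge0 => //; by rewrite oppr_ge0.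
Qed.

Lemma E_lemma (I : finType) (l : I -> V -> R) (hl : forall i, affine (l i)) :
  forall n (S : {set I}), (#|S| <= n)%N -> forall (D : set V) v0 (H : V -> R) (p : R),
  convset D -> riext D v0 -> (forall i, i \in S -> l i v0 = 0) -> convon D H ->
  (forall v, D v -> (forall i, i \in S -> l i v = 0) -> p <= H v) ->
  exists mu : I -> R, forall v, D v -> p <= H v + \sum_(i in S) mu i * l i v.
Proof.
elim=> [|n IH] S cS D v0 H p cD [Dv0 rD] hv0 cH hp.
  move: cS; rewrite leqn0 cards_eq0 => /eqP S0; subst S.
  by exists (fun=> 0) => v Dv; rewrite big_set0 addr0; apply: hp => // i; rewrite inE.
have [S0|[k kS]] := set_0Vmem S.
  by subst S; exists (fun=> 0) => v Dv; rewrite big_set0 addr0; apply: hp => // i; rewrite inE.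
set S' := S :\ k.
have cS' : (#|S'| <= n)%N by move: cS; rewrite (cardsD1 k S) kS.
set D' := fun v => D v /\ forall i, i \in S' -> l i v = 0.
have cD' : convset D' by apply: convset_cap_eq.
have [kk hk] : exists kk, forall v, D' v -> p <= H v + kk * l k v.
  apply: oneD_eq => //.
  - by apply: convon_sub cH => v [].
  - move=> v [Dv hv] lkv; apply: hp => // i iS.
    have [->//|ik] := eqVneq i k; apply: hv; by rewrite in_setD1 ik.
  - move=> v [Dv hv] lkv.
    have [e e0 he] := rD v Dv.
    exists (comb (1 + e) v0 v); split.
      split; first by apply: he => //.
      move=> i iS'; rewrite hl hv0 ?hv //; last by move: iS'; rewrite in_setD1 => /andP[].
      by rewrite !mulr0 addr0.
    rewrite hl hv0 // mulr0 add0r.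
    have -> : 1 - (1 + e) = - e by ring.
    rewrite mulNr mulrN oppr_lt0 mulrCA mulr_gt0 //.
    by rewrite lt0r mulf_neq0 //= -expr2 sqr_ge0.
have hv0' : forall i, i \in S' -> l i v0 = 0.
  by move=> i; rewrite in_setD1 => /andP[_ ?]; apply: hv0.
have [mu hmu] := IH S' cS' D v0 (fun v => H v + kk * l k v) p cD (conj Dv0 rD)
  hv0' (convon_add cH (affine_scale kk (hl k)))
  (fun v Dv hv => hk v (conj Dv hv)).
exists (fun i => if i == k then kk else mu i) => v Dv.
rewrite (big_setD1 k kS) /= eqxx addrA.
have := hmu v Dv.
suff -> : \sum_(i in S :\ k) (if i == k then kk else mu i) * l i v = \sum_(i in S') mu i * l i v by [].
apply: eq_bigr => i; rewrite in_setD1 => /andP[/negPf -> _] //.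
Qed.

Lemma affine_convon (D : set V) a : affine a -> convon D a.
Proof. by move=> aa t u v _ _ _ _; rewrite aa. Qed.

Lemma sum_nonpos_zero (I : finType) (J : {set I}) (F : I -> R) :
  (forall i, i \in J -> F i <= 0) -> 0 <= \sum_(i in J) F i -> forall i, i \in J -> F i = 0.
Proof.
move=> hF hs i iJ.
have h0 : \sum_(i in J) - F i = 0.
  apply/eqP; rewrite eq_le sumr_ge0 ?andbT; last by move=> j jJ; rewrite oppr_ge0 hF.
  by rewrite sumrN oppr_le0.
have hF' : forall j, j \in J -> 0 <= - F j by move=> j jJ; rewrite oppr_ge0 hF.
by have := psumr_eq0P hF' h0 iJ => /eqP; rewrite oppr_eq0 => /eqP.
Qed.

Lemma M_lemma (I : finType) (l : I -> V -> R) (hl : forall i, affine (l i)) :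
  forall n (J : {set I}), (#|J| <= n)%N -> forall (D : set V) v0 (H : V -> R) (p : R),
  convset D -> riext D v0 -> (forall i, i \in J -> l i v0 <= 0) -> convon D H ->
  (forall v, D v -> (forall i, i \in J -> l i v <= 0) -> p <= H v) ->
  exists kap : I -> R, (forall i, 0 <= kap i) /\
    forall v, D v -> p <= H v + \sum_(i in J) kap i * l i v.
Proof.
elim=> [|n IH] J cJ D v0 H p cD [Dv0 rD] hv0 cH hp.
  move: cJ; rewrite leqn0 cards_eq0 => /eqP J0; subst J.
  exists (fun=> 0); split => // v Dv; rewrite big_set0 addr0; apply: hp => // i; by rewrite inE.
have [J0|[k kJ]] := set_0Vmem J.
  subst J; exists (fun=> 0); split => // v Dv; rewrite big_set0 addr0; apply: hp => // i; by rewrite inE.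
set J' := J :\ k.
have cJ' : (#|J'| <= n)%N by move: cJ; rewrite (cardsD1 k J) kJ.
have hv0' : forall i, i \in J' -> l i v0 <= 0.
  by move=> i; rewrite in_setD1 => /andP[_ ?]; apply: hv0.
set D' := fun v => D v /\ forall i, i \in J' -> l i v <= 0.
have cD' : convset D' by apply: convset_cap_le.
have [[w [Dw lw]]|noA] := pselect (exists w, D' w /\ l k w < 0).
  have [kk [kk0 hk]] : exists kk, 0 <= kk /\ forall v, D' v -> p <= H v + kk * l k v.
    apply: oneD_ineq => //; last by exists w.
    - by apply: convon_sub cH => v [].
    - move=> v [Dv hv] lkv; apply: hp => // i iJ.
      have [->//|ik] := eqVneq i k; apply: hv; by rewrite in_setD1 ik.
  have [kap [kap0 hkap]] := IH J' cJ' D v0 (fun v => H v + kk * l k v) p cD (conj Dv0 rD)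
    hv0' (convon_add cH (affine_scale kk (hl k))) (fun v Dv hv => hk v (conj Dv hv)).
  exists (fun i => if i == k then kk else kap i); split.
    by move=> i; case: (i == k).
  move=> v Dv; rewrite (big_setD1 k kJ) /= eqxx addrA.
  have := hkap v Dv.
  suff -> : \sum_(i in J :\ k) (if i == k then kk else kap i) * l i v = \sum_(i in J') kap i * l i v by [].
  apply: eq_bigr => i; rewrite in_setD1 => /andP[/negPf -> _] //.
have hB : forall v, D v -> (forall i, i \in J' -> l i v <= 0) -> 0 <= l k v.
  move=> v Dv hv; case: leP => // lkv; exfalso; apply: noA; exists v; split => //.
have [lam [lam0 hlam]] := IH J' cJ' D v0 (l k) 0 cD (conj Dv0 rD) hv0' (affine_convon (D:=D) (hl k)) hB.
set c := fun i => if i == k then 1 else lam i.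
have c0 : forall i, 0 <= c i by move=> i; rewrite /c; case: (i == k).
have hG : forall v, D v -> 0 <= \sum_(i in J) c i * l i v.
  move=> v Dv; rewrite (big_setD1 k kJ) /= /c eqxx mul1r.
  suff -> : \sum_(i in J :\ k) (if i == k then 1 else lam i) * l i v = \sum_(i in J') lam i * l i v.
    exact: hlam.
  apply: eq_bigr => i; rewrite in_setD1 => /andP[/negPf -> _] //.
set S := [set i in J | 0 < c i].
have kS : k \in S by rewrite inE kJ /c eqxx ltr01.
have SJ : S \subset J by apply/fintype.subsetP => i; rewrite inE => /andP[].
set J2 := J :\: S.
have cJ2 : (#|J2| <= n)%N.
  apply: leq_trans cJ'; apply: subset_leq_card; rewrite /J2 /J'; apply: finset.setDS; by rewrite finset.sub1set.
have zeroS : forall v, D v -> (forall i, i \in J -> l i v <= 0) -> forall i, i \in S -> l i v = 0.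
  move=> v Dv hv i; rewrite inE => /andP[iJ ci].
  have := sum_nonpos_zero (F := fun i => c i * l i v) _ (hG v Dv) iJ.
  move=> /(_ _)/eqP; rewrite mulf_eq0 gt_eqF //= => /(_ _)/eqP -> //.
  by move=> j jJ; rewrite mulr_ge0_le0 // hv.
have hv0S : forall i, i \in S -> l i v0 = 0 := zeroS v0 Dv0 hv0.
set D1 := fun v => D v /\ forall i, i \in S -> l i v = 0.
have cD1 : convset D1 by apply: convset_cap_eq.
have rD1 : riext D1 v0.
  split; first by split.
  move=> v [Dv hv]; have [e e0 he] := rD v Dv; exists e => // e' e'0 e'e; split; first exact: he.
  by move=> i iS; rewrite hl hv0S // hv // !mulr0 addr0.
have hJ2J : forall i, i \in J2 -> i \in J by move=> i; rewrite finset.in_setD => /andP[_ ->].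
have hyp1 : forall v, D1 v -> (forall i, i \in J2 -> l i v <= 0) -> p <= H v.
  move=> v [Dv hvS] hv2; apply: hp => // i iJ; case: (boolP (i \in S)) => iS.
    by rewrite hvS.
  by apply: hv2; rewrite finset.in_setD iS iJ.
have [kap2 [kap20 hk2]] := IH J2 cJ2 D1 v0 H p cD1 rD1 (fun i i2 => hv0 i (hJ2J i i2))
  (convon_sub (D:=D) (D':=D1) (fun v (h : D1 v) => proj1 h) cH) hyp1.
have hyp2 : forall v, D v -> (forall i, i \in S -> l i v = 0) ->
    p <= H v + \sum_(i in J2) kap2 i * l i v.
  by move=> v Dv hv; apply: hk2; split.
have [mu hmu] := E_lemma hl (leqnn #|S|) cD (conj Dv0 rD) hv0S
  (convon_add cH (affine_sum J2 kap2 hl)) hyp2.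
set C := \sum_(i in S) `|mu i| / c i.
have C0 : 0 <= C by rewrite sumr_ge0 // => j _; rewrite divr_ge0.
have cS : forall i, i \in S -> 0 < c i by move=> i; rewrite inE => /andP[].
have cnS : forall i, i \in J -> i \notin S -> c i = 0.
  move=> i iJ; rewrite inE iJ /= => /negP ci; apply/eqP; rewrite eq_le c0 andbT.
  by rewrite leNgt; apply/negP.
exists (fun i => if i \in S then mu i + C * c i else kap2 i); split.
  move=> i; case: ifP => iS //.
  have hC : `|mu i| / c i <= C.
    rewrite /C (big_setD1 i iS) /= lerDl sumr_ge0 // => j _; by rewrite divr_ge0.
  have ci := cS i iS.
  have h2 : `|mu i| <= C * c i by rewrite -ler_pdivrMr.
  have h1 := ler_norm (- mu i); rewrite normrN in h1; lra.
move=> v Dv.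
have e1 : \sum_(i in J) (if i \in S then mu i + C * c i else kap2 i) * l i v =
    \sum_(i in S) mu i * l i v + C * \sum_(i in S) c i * l i v + \sum_(i in J2) kap2 i * l i v.
  rewrite (big_setID S) /= (finset.setIidPr SJ) mulr_sumr -big_split /=.
  congr (_ + _); apply: eq_bigr => i.
    by move=> iS; rewrite iS; ring.
  by rewrite finset.in_setD => /andP[/negPf -> _].
have e2 : \sum_(i in J) c i * l i v = \sum_(i in S) c i * l i v.
  rewrite (big_setID S) /= (finset.setIidPr SJ) [X in _ + X]big1 ?addr0 //.
  by move=> i; rewrite finset.in_setD => /andP[iS iJ]; rewrite cnS // mul0r.
rewrite e1; have := hmu v Dv; have := hG v Dv; rewrite e2 => hg hm.
have : 0 <= C * \sum_(i in S) c i * l i v by apply: mulr_ge0.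
lra.
Qed.

End Abstract.


Section App.
Variable R : realType.

Lemma dotvC N (u v : 'cV[R]_N) : dotv u v = dotv v u.
Proof. by apply: eq_bigr => i _; rewrite mulrC. Qed.

Lemma dotvDr N (u v w : 'cV[R]_N) : dotv u (v + w) = dotv u v + dotv u w.
Proof. by rewrite /dotv -big_split; apply: eq_bigr => i _; rewrite !mxE mulrDr. Qed.

Lemma dotvZr N (u v : 'cV[R]_N) a : dotv u (a *: v) = a * dotv u v.
Proof. by rewrite /dotv mulr_sumr; apply: eq_bigr => i _; rewrite !mxE mulrCA. Qed.

Lemma dotvNr N (u v : 'cV[R]_N) : dotv u (- v) = - dotv u v.
Proof. by rewrite /dotv -sumrN; apply: eq_bigr => i _; rewrite !mxE mulrN. Qed.

Lemma dotvBr N (u v w : 'cV[R]_N) : dotv u (v - w) = dotv u v - dotv u w.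
Proof. by rewrite dotvDr dotvNr. Qed.

Lemma dotvDl N (u v w : 'cV[R]_N) : dotv (v + w) u = dotv v u + dotv w u.
Proof. by rewrite dotvC dotvDr dotvC [dotv u w]dotvC. Qed.

Lemma dotvNl N (u v : 'cV[R]_N) : dotv (- v) u = - dotv v u.
Proof. by rewrite dotvC dotvNr dotvC. Qed.

Lemma dotv_mul M N (A : 'M[R]_(M, N)) (u : 'cV[R]_M) (x : 'cV[R]_N) :
  dotv (A^T *m u) x = dotv u (A *m x).
Proof.
rewrite /dotv; under eq_bigr do rewrite !mxE big_distrl /=.
rewrite exchange_big /=; apply: eq_bigr => i _; rewrite !mxE big_distrr /=.
by apply: eq_bigr => j _; rewrite !mxE; ring.
Qed.

Lemma dotv_comb N (a x y : 'cV[R]_N) t :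
  dotv a (t *: x + (1 - t) *: y) = t * dotv a x + (1 - t) * dotv a y.
Proof. by rewrite dotvDr !dotvZr. Qed.

Definition combC (N : nat) (t : R) (u v : 'cV[R]_N * R) : 'cV[R]_N * R :=
  (t *: u.1 + (1 - t) *: v.1, t * u.2 + (1 - t) * v.2).

Lemma finE_proper N (h : 'cV[R]_N -> \bar R) x : proper_fun h -> (h x < +oo)%E -> h x = (fine (h x))%:E.
Proof. by case=> hn _; move: (hn x); case: (h x). Qed.

Lemma component N (h : 'cV[R]_N -> \bar R) x0 : proper_fun h -> convex_fun h ->
  (rel_int (dom h) x0 \/ (polyhedral_fun h /\ dom h x0)) ->
  exists k (Dh : set ('cV[R]_N * R)) (Hh : 'cV[R]_N * R -> R)
    (ah : 'I_k -> 'cV[R]_N * R -> R) (t0 : R),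
  [/\ convset (@combC N) Dh, convon (@combC N) Dh Hh, (forall j, affine (@combC N) (ah j)),
     riext (@combC N) Dh (x0, t0) & (forall j, ah j (x0, t0) <= 0)] /\
     ((forall x, (h x < +oo)%E -> exists t, [/\ Dh (x, t), Hh (x, t) = fine (h x) &
          forall j, ah j (x, t) <= 0]) /\
     (forall x t, Dh (x, t) -> (forall j, ah j (x, t) <= 0) ->
          (h x < +oo)%E /\ fine (h x) <= Hh (x, t))).
Proof.
move=> hp hc [[hx0 [er er0 her]]|[[k [a [al [be hpoly]]]] hx0]].
- exists 0%N, (fun u => (h u.1 < +oo)%E), (fun u => fine (h u.1)), (fun _ _ => 0), 0.
  split; [split|split].
  + move=> t u v t0 t1 Du Dv /=.
    by apply: (le_lt_trans (hc _ _ _ t0 t1 Du Dv)); rewrite ltry.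
  + move=> t u v t0 t1 Du Dv /=.
    have := hc _ _ _ t0 t1 Du Dv.
    rewrite (finE_proper hp (le_lt_trans (hc _ _ _ t0 t1 Du Dv) (ltry _))) lee_fin //.
  + by move=> j t u v; rewrite !mulr0 addr0.
  + split => // v Dv.
    set d := fun i : 'I_N => `|x0 i 0 - v.1 i 0|.
    set M := 1 + \sum_i d i.
    have s0 : 0 <= \sum_i d i by apply: sumr_ge0 => i _; rewrite /d normr_ge0.
    have M0 : 0 < M by rewrite /M; lra.
    have dM : forall i, d i < M.
      move=> i; rewrite /M (bigD1 i) //=.
      have : 0 <= \sum_(j | j != i) d j by apply: sumr_ge0 => j _; rewrite /d normr_ge0.
      lra.
    exists (er / M); first by rewrite divr_gt0.
    move=> e' e'0 e'e; apply: her.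
      exists 2%N, (fun j : 'I_2 => if val j == 0%N then x0 else v.1),
        (fun j : 'I_2 => if val j == 0%N then 1 + e' else 1 - (1 + e')).
      split; first by move=> j; case: ifP.
      rewrite !big_ord_recl big_ord0 /=; split; [ring|by rewrite big_ord0 addr0].
    move=> i /=; rewrite !mxE.
    have -> : (1 + e') * x0 i 0 + (1 - (1 + e')) * v.1 i 0 - x0 i 0 = e' * (x0 i 0 - v.1 i 0) by ring.
    rewrite normrM (gtr0_norm e'0) -/(d i).
    apply: (le_lt_trans (ler_wpM2r (normr_ge0 _) e'e)).
    rewrite -(ltr_pM2r M0) -mulrA [d i * M]mulrC mulrA divfK ?gt_eqF //.
    by rewrite ltr_pM2l.
  + by [].
  + by move=> x hx; exists 0; split.
  + by move=> x t Dx _; split.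
- have hfin := finE_proper hp.
  exists k, setT, (fun u => u.2), (fun j u => dotv (a j) u.1 + al j * u.2 - be j), (fine (h x0)).
  split; [split|split].
  + by [].
  + by move=> t u v _ _ _ _.
  + by move=> j t u v; rewrite /= dotv_comb; ring.
  + by split => // v _; exists 1.
  + move=> j /=; rewrite subr_le0; move: j; apply/hpoly; rewrite -hfin //.
  + move=> x hx; exists (fine (h x)); split => //.
    move=> j /=; rewrite subr_le0; move: j; apply/hpoly; rewrite -hfin //.
  + move=> x t _ hj.
    have : (h x <= t%:E)%E by apply/hpoly => j; have := hj j; rewrite /= subr_le0.
    move=> hle; have hlt : (h x < +oo)%E by apply: le_lt_trans hle _; rewrite ltry.
    by split => //; move: hle; rewrite hfin // lee_fin.
Qed.

End App.


Section Main.
Variables (R : realType) (n m r : nat) (f : 'cV[R]_n -> \bar R) (g : 'cV[R]_m -> \bar R)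
  (A : 'M[R]_(m, n)) (B : 'M[R]_(r, n)) (b : 'cV[R]_r).
Hypotheses (hfp : proper_fun f) (hfc : convex_fun f) (hgp : proper_fun g) (hgc : convex_fun g).

Lemma mult_Xi (p : R) (y : 'cV[R]_m) (z : 'cV[R]_r) :
  (forall x w, (f x < +oo)%E -> (g w < +oo)%E ->
     p <= fine (f x) + fine (g w) - dotv y (w - A *m x) + dotv z (B *m x - b)) ->
  (Xi f g A B b y z <= (- p)%:E)%E.
Proof.
move=> hyp.
set q := - (A^T *m y) - (B^T *m z).
have key : forall x w, (f x < +oo)%E -> (g w < +oo)%E ->
    dotv q x - fine (f x) <= - p - dotv b z - (dotv y w - fine (g w)).
  move=> x w fx gw; have := hyp x w fx gw.
  rewrite /q dotvDl !dotvNl !dotv_mul dotvBr dotvBr [dotv b z]dotvC; lra.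
have hf : forall w, (g w < +oo)%E ->
    (conj_fun f q <= (- p - dotv b z - (dotv y w - fine (g w)))%:E)%E.
  move=> w gw; apply: ge_ereal_sup => _ [x _ <-].
  have [fx|] := boolP (f x < +oo)%E.
    by rewrite (finE_proper hfp fx) -EFinB lee_fin key.
  rewrite -leNgt leye_eq => /eqP ->; by rewrite addeNy leNye.
have [w1 gw1] := hgp.2.
have [x1 fx1] := hfp.2.
have cfr : conj_fun f q = (fine (conj_fun f q))%:E.
  have h1 : ((dotv q x1 - fine (f x1))%:E <= conj_fun f q)%E.
    apply: ereal_sup_ubound; exists x1 => //; by rewrite (finE_proper hfp fx1).
  have h2 := hf w1 gw1.
  move: h1 h2; case: (conj_fun f q) => //.
set cf := fine (conj_fun f q).
have hg : (conj_fun g y <= (- p - dotv b z - cf)%:E)%E.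
  apply: ge_ereal_sup => _ [w _ <-].
  have [gw|] := boolP (g w < +oo)%E.
    rewrite (finE_proper hgp gw) -EFinB lee_fin.
    have := hf w gw; rewrite cfr lee_fin -/cf; lra.
  rewrite -leNgt leye_eq => /eqP ->; by rewrite addeNy leNye.
rewrite /Xi -/q cfr -/cf.
move: hg; case: (conj_fun g y) => [c| |] //=.
  by rewrite !lee_fin => hc; lra.
move=> _; rewrite addeNy addNye; exact: leNye.
Qed.

Variable x0 : 'cV[R]_n.
Hypotheses (hx0f : dom f x0) (hx0g : dom g (A *m x0)) (hBx0 : B *m x0 = b).
Variable M0 : R.
Hypothesis hM : forall x, (M0%:E <= f x + g (A *m x))%E.

Definition feasS (S : {set 'I_r}) : set 'cV[R]_n :=
  [set x | (f x < +oo)%E /\ (g (A *m x) < +oo)%E /\ forall i, i \in S -> (B *m x) i 0 = b i 0].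

Definition valS S : set R := [set fine (f x) + fine (g (A *m x)) | x in feasS S].

Definition pS S := inf (valS S).

Lemma feasS_x0 S : feasS S x0.
Proof. by split => //; split => // i _; rewrite hBx0. Qed.

Lemma valS_lb S : lbound (valS S) M0.
Proof.
move=> _ [x [fx [gx _]] <-].
have := hM x; rewrite (finE_proper hfp fx) (finE_proper hgp gx) -EFinD lee_fin /=.
by [].
Qed.

Lemma pS_le S x : feasS S x -> pS S <= fine (f x) + fine (g (A *m x)).
Proof. move=> fx; apply: ge_inf; [by exists M0; apply: valS_lb | by exists x]. Qed.

Lemma pS_ge S c : (forall x, feasS S x -> c <= fine (f x) + fine (g (A *m x))) -> c <= pS S.
Proof.
move=> hc; apply: lb_le_inf; first by exists (fine (f x0) + fine (g (A *m x0))), x0 => //; apply: feasS_x0.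
by move=> _ [x fx <-]; apply: hc.
Qed.

Lemma low_Xi (S : {set 'I_r}) (y : 'cV[R]_m) (z : 'cV[R]_r) x : (forall i, i \notin S -> z i 0 = 0) -> feasS S x ->
  ((- (fine (f x) + fine (g (A *m x))))%:E <= Xi f g A B b y z)%E.
Proof.
move=> zS [fx [gx bx]].
set q := - (A^T *m y) - (B^T *m z).
have h1 : ((dotv q x - fine (f x))%:E <= conj_fun f q)%E.
  by apply: ereal_sup_ubound; exists x => //; rewrite (finE_proper hfp fx).
have h2 : ((dotv y (A *m x) - fine (g (A *m x)))%:E <= conj_fun g y)%E.
  by apply: ereal_sup_ubound; exists (A *m x) => //; rewrite (finE_proper hgp gx).
have h3 : dotv z (B *m x - b) = 0.
  rewrite /dotv big1 // => i _.
  have [iS|iS] := boolP (i \in S); last by rewrite zS // mul0r.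
  have -> : (B *m x - b) i 0 = (B *m x) i 0 - b i 0 by rewrite !mxE.
  by rewrite bx // subrr mulr0.
rewrite /Xi -/q.
apply: le_trans (leeD (leeD h1 h2) (lexx (dotv b z)%:E)).
rewrite -!EFinD lee_fin.
move: h3; rewrite /q dotvDl !dotvNl !dotv_mul dotvBr [dotv b z]dotvC; lra.
Qed.

Lemma weak_dual (S : {set 'I_r}) (y : 'cV[R]_m) (z : 'cV[R]_r) : (forall i, i \notin S -> z i 0 = 0) ->
  ((- pS S)%:E <= Xi f g A B b y z)%E.
Proof.
move=> zS.
have h0 := low_Xi y zS (feasS_x0 S).
move: h0; case E: (Xi f g A B b y z) => [c| |] // h0.
rewrite lee_fin lerNl; apply: pS_ge => x fx.
have := low_Xi y zS fx; rewrite E lee_fin; lra.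
exact: leey.
Qed.

Hypotheses (hqf : rel_int (dom f) x0 \/ (polyhedral_fun f /\ dom f x0))
  (hqg : rel_int (dom g) (A *m x0) \/ (polyhedral_fun g /\ dom g (A *m x0))).

Lemma supp_mult (S : {set 'I_r}) : exists (y : 'cV[R]_m) (z : 'cV[R]_r),
  (forall i, i \notin S -> z i 0 = 0) /\ (Xi f g A B b y z <= (- pS S)%:E)%E.
Proof.
have [kf [Df [Hf [af [tf [[cDf cHf aaf rDf af0] [P1f P2f]]]]]]] := component hfp hfc hqf.
have [kg [Dg [Hg [ag [tg [[cDg cHg aag rDg ag0] [P1g P2g]]]]]]] := component hgp hgc hqg.
pose V := (('cV[R]_n * R) * ('cV[R]_m * R))%type.
pose combV (t : R) (u v : V) : V := (combC t u.1 v.1, combC t u.2 v.2).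
pose D : set V := fun v => Df v.1 /\ Dg v.2.
pose H : V -> R := fun v => Hf v.1 + Hg v.2.
pose I : finType := ((('I_kf + 'I_kg) + ('I_m + 'I_m)) + ('I_r + 'I_r))%type.
pose ell : I -> V -> R := fun i v => match i with
  | inl (inl (inl j)) => af j v.1
  | inl (inl (inr j)) => ag j v.2
  | inl (inr (inl j)) => (v.2.1 - A *m v.1.1) j 0
  | inl (inr (inr j)) => - (v.2.1 - A *m v.1.1) j 0
  | inr (inl i) => (i \in S)%:R * (B *m v.1.1 - b) i 0
  | inr (inr i) => - ((i \in S)%:R * (B *m v.1.1 - b) i 0)
  end.
have aell : forall i, affine combV (ell i).
  case=> [[[j|j]|[j|j]]|[j|j]] t u v /=.
  - exact: aaf.
  - exact: aag.
  - by rewrite /combC /= mulmxDr -!scalemxAr !mxE; ring.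
  - by rewrite /combC /= mulmxDr -!scalemxAr !mxE; ring.
  - by rewrite /combC /= mulmxDr -!scalemxAr !mxE; ring.
  - by rewrite /combC /= mulmxDr -!scalemxAr !mxE; ring.
have cD : convset combV D.
  by move=> t u v t0 t1 [Du1 Du2] [Dv1 Dv2]; split; [exact: cDf | exact: cDg].
have cH : convon combV D H.
  move=> t u v t0 t1 [Du1 Du2] [Dv1 Dv2].
  have := cHf t _ _ t0 t1 Du1 Dv1; have := cHg t _ _ t0 t1 Du2 Dv2; rewrite /H /=; lra.
pose v0 : V := ((x0, tf), (A *m x0, tg)).
have rD : riext combV D v0.
  split; first by split; [exact: rDf.1 | exact: rDg.1].
  move=> v [Dv1 Dv2]; have [e1 e10 he1] := rDf.2 _ Dv1; have [e2 e20 he2] := rDg.2 _ Dv2.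
  exists (Num.min e1 e2); first by rewrite lt_min e10.
  by move=> e' e'0; rewrite le_min => /andP[h1 h2]; split; [exact: he1 | exact: he2].
have hv0 : forall i, i \in [set: I]%SET -> ell i v0 <= 0.
  case=> [[[j|j]|[j|j]]|[j|j]] _ /=.
  - exact: af0.
  - exact: ag0.
  - by rewrite subrr mxE.
  - by rewrite subrr mxE oppr0.
  - by rewrite hBx0 subrr mxE mulr0.
  - by rewrite hBx0 subrr mxE mulr0 oppr0.
have hp : forall v, D v -> (forall i, i \in [set: I]%SET -> ell i v <= 0) -> pS S <= H v.
  move=> [[x t] [w s]] [Dx Dw] hl /=.
  have [fx hfx] := P2f x t Dx (fun j => hl (inl (inl (inl j))) (finset.in_setT _)).
  have [gw hgw] := P2g w s Dw (fun j => hl (inl (inl (inr j))) (finset.in_setT _)).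
  have wAx : w = A *m x.
    apply/matrixP => j k; rewrite (ord1 k).
    have h1 := hl (inl (inr (inl j))) (finset.in_setT _); have h2 := hl (inl (inr (inr j))) (finset.in_setT _).
    simpl in h1, h2.
    have e : (w - A *m x) j 0 = w j 0 - (A *m x) j 0 by rewrite !mxE.
    rewrite e in h1 h2; lra.
  have bx : forall i, i \in S -> (B *m x) i 0 = b i 0.
    move=> i iS.
    have h1 := hl (inr (inl i)) (finset.in_setT _); have h2 := hl (inr (inr i)) (finset.in_setT _).
    simpl in h1, h2; rewrite iS mul1r in h1 h2.
    have e : (B *m x - b) i 0 = (B *m x) i 0 - b i 0 by rewrite !mxE.
    rewrite e in h1 h2; lra.
  apply: le_trans (pS_le (x := x) _) _.
    by split => //; split => //; rewrite -wAx.
  rewrite /H /= -wAx; lra.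
have [kap [kap0 hk]] : exists kap : I -> R, (forall i, 0 <= kap i) /\
    forall v, D v -> pS S <= H v + \sum_(i in [set: I]%SET) kap i * ell i v.
  apply: (M_lemma aell (leqnn _)). all: try eassumption.
pose y : 'cV[R]_m := \col_j (kap (inl (inr (inr j))) - kap (inl (inr (inl j)))).
pose z : 'cV[R]_r := \col_i ((i \in S)%:R * (kap (inr (inl i)) - kap (inr (inr i)))).
exists y, z; split.
  by move=> i iS; rewrite /z mxE (negPf iS) mul0r.
apply: mult_Xi => x w fx gw.
have [t [Dx Hx afx]] := P1f x fx; have [s [Dw Hw agw]] := P1g w gw.
have := hk ((x, t), (w, s)) (conj Dx Dw).
rewrite /H /= Hx Hw.
rewrite (eq_bigl xpredT); last by move=> i; rewrite inE.
rewrite !big_sumType /=.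
have e1 : \sum_j kap (inl (inr (inl j))) * (w - A *m x) j 0 +
    \sum_j kap (inl (inr (inr j))) * - (w - A *m x) j 0 = - dotv y (w - A *m x).
  rewrite /dotv -sumrN -big_split; apply: eq_bigr => j _ /=; rewrite !mxE; ring.
have e2 : \sum_i kap (inr (inl i)) * ((i \in S)%:R * (B *m x - b) i 0) +
    \sum_i kap (inr (inr i)) * - ((i \in S)%:R * (B *m x - b) i 0) = dotv z (B *m x - b).
  rewrite /dotv -big_split; apply: eq_bigr => i _ /=; rewrite !mxE; ring.
rewrite e1 e2.
have P1 : \sum_j kap (inl (inl (inl j))) * af j (x, t) <= 0.
  by apply: sumr_le0 => j _; rewrite mulr_ge0_le0.
have P2 : \sum_j kap (inl (inl (inr j))) * ag j (w, s) <= 0.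
  by apply: sumr_le0 => j _; rewrite mulr_ge0_le0.
lra.
Qed.

End Main.

Unset Implicit Arguments.


Lemma fin_min (R : realType) (T : finType) (t0 : T) (F : T -> R) : exists t, forall s, F t <= F s.
Proof.
case: (@arg_minP _ _ T t0 xpredT F) => // t _ h; exists t => s; exact: h.
Qed.

Theorem mainTheorem7 (R : realType) (n m r : nat)
    (f : 'cV[R]_n -> \bar R) (g : 'cV[R]_m -> \bar R)
    (A : 'M[R]_(m, n)) (B : 'M[R]_(r, n)) (b : 'cV[R]_r)
    (hfp : proper_fun f) (hfl : lsc_fun f) (hfc : convex_fun f)
    (hgp : proper_fun g) (hgl : lsc_fun g) (hgc : convex_fun g)
    (hbdd : exists M : R, forall x : 'cV[R]_n, (M%:E <= f x + g (A *m x))%E)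
    (hqual : exists x : 'cV[R]_n,
        (rel_int (dom f) x \/ (polyhedral_fun f /\ dom f x)) /\
        (rel_int (dom g) (A *m x) \/ (polyhedral_fun g /\ dom g (A *m x))) /\
        B *m x = b) :
  forall mu : 'cV[R]_r, (forall i, 0 < mu i 0) ->
    exists (y0 : 'cV[R]_m) (z0 : 'cV[R]_r),
      forall (y : 'cV[R]_m) (z : 'cV[R]_r),
        (Xi f g A B b y0 z0 + (Psi0 mu z0)%:E <= Xi f g A B b y z + (Psi0 mu z)%:E)%E.
Proof.
move=> mu hmu.
have [x0 [hqf [hqg hBx0]]] := hqual.
have [M hM] := hbdd.
have hx0f : dom f x0 by case: hqf => [[]|[]].
have hx0g : dom g (A *m x0) by case: hqg => [[]|[]].
pose val (T : {set 'I_r}) := - pS f g A B b T + \sum_(i in T) mu i 0.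
have [T0 hT0] := @fin_min R _ [set: 'I_r]%SET val.
have [y0 [z0 [zS hXi]]] := supp_mult hfp hfc hgp hgc hBx0 hM hqf hqg T0.
exists y0, z0 => y z.
pose T := [set i | z i 0 != 0]%SET.
have zT : forall i, i \notin T -> z i 0 = 0.
  by move=> i; rewrite inE negbK => /eqP.
have hw := weak_dual hfp hgp hx0f hx0g hBx0 y zT.
have PsiT : Psi0 mu z = \sum_(i in T) mu i 0.
  rewrite /Psi0 [RHS]big_mkcond /=; apply: eq_bigr => i _; rewrite inE.
  by case: (z i 0 != 0); rewrite ?mulr1 ?mulr0.
have Psi0le : Psi0 mu z0 <= \sum_(i in T0) mu i 0.
  rewrite /Psi0 [X in _ <= X]big_mkcond /=; apply: ler_sum => i _.
  have [iT|iT] := boolP (i \in T0).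
    by case: (z0 i 0 != 0); rewrite ?mulr1 ?mulr0 // ltW.
  by rewrite zS // eqxx mulr0.
apply: (@le_trans _ _ ((val T0)%:E)).
  rewrite /val EFinD; apply: leeD => //; by rewrite lee_fin.
apply: (@le_trans _ _ ((val T)%:E)); first by rewrite lee_fin.
rewrite /val EFinD -PsiT; apply: leeD => //.
Qed.
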